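(* Let $M\ge1$ and $m_0\ge1$ be integers. For each $i\in\{1,\dots,M\}$ let $A_i\in\mathbb{R}^{n_i\times n_i}$, $B_i,F_i\in\mathbb{R}^{n_i\times m_0}$, $C_i\in\mathbb{R}^{m_0\times n_i}$, let $\mathcal{N}_i^-\subseteq\{1,\dots,M\}\setminus\{i\}$ and $l_{ij}\in\mathbb{R}$ for $j\in\mathcal{N}_i^-$, and consider the interconnected discrete-time system $$x_i^+=A_ix_i+B_iu_i+F_iv_i,\quad y_i=C_ix_i,\quad v_i=\sum_{j\in\mathcal{N}_i^-}l_{ij}(y_j-y_i),\qquad i=1,\dots,M.$$ Let $n=\sum_in_i$, $m=Mm_0$, $C=\operatorname{diag}(C_1,\dots,C_M)$, and let $\tilde L\in\mathbb{R}^{m\times m}$ be the block matrix with $m_0\times m_0$ blocks $\tilde L_{ii}=\big(\sum_{j\in\mathcal{N}_i^-}l_{ij}\big)I_{m_0}$, $\tilde L_{ij}=-l_{ij}I_{m_0}$ for $j\in\mathcal{N}_i^-$, and $\tilde L_{ij}=0$ otherwise; assume $w^\top\tilde Lw\ge0$ for all $w\in\mathbb{R}^m$. Let $U=\tilde LC\in\mathbb{R}^{m\times n}$ and $W=C^\top\tilde L^\top\in\mathbb{R}^{n\times m}$, and partition them into block rows $U=[U_1^\top,\dots,U_M^\top]^\top$ with $U_i\in\mathbb{R}^{m_0\times n}$ and $W=[W_1^\top,\dots,W_M^\top]^\top$ with $W_i\in\mathbb{R}^{n_i\times m}$. Fix $\epsilon_0>0$ and $\epsilon_i>0$ for $i=1,\dots,M$.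 Suppose that for every $i\in\{1,\dots,M\}$ there exist $S_i\in\mathbb{R}^{m_0\times m_0}$, $G_i\in\mathbb{R}^{m_0\times n_i}$, symmetric $E_i\in\mathbb{R}^{n_i\times n_i}$ and $H_i\in\mathbb{R}^{n_i\times n_i}$ satisfying: (i) $E_i\succeq\epsilon_iI_{n_i}$; (ii) $H_i$ and $S_i$ are diagonal with strictly positive diagonal entries; (iii) $$\begin{bmatrix} E_i & \tfrac12 E_iC_i^\top & (A_iE_i+B_iG_i)^\top & E_i\\ \tfrac12 C_iE_i & \tfrac12 S_i+\tfrac12 S_i^\top & F_i^\top & 0\\ A_iE_i+B_iG_i & F_i & E_i & 0\\ E_i & 0 & 0 & H_i \end{bmatrix}\succeq 0;$$ (iv) $[H_i]_j\le\dfrac{1}{|W_i|_j+\epsilon_0}$ for all $j\in\{1,\dots,n_i\}$; (v) $[S_i]_k\le\dfrac{1}{|U_i|_k}$ for all $k\in\{1,\dots,m_0\}$ with $|U_i|_k>0$. Then the decentralized control laws $u_i=K_ix_i$ with $K_i=G_iE_i^{-1}$, $i=1,\dots,M$, render the origin of the global closed-loop system asymptotically stable.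
   Context: For a matrix $T$, $[T]_j$ denotes its $j$-th diagonal entry and $|T|_j$ the $1$-norm (sum of absolute values of entries) of its $j$-th row. $I_k$ is the $k\times k$ identity matrix and $M\succeq0$ means the symmetric matrix $M$ is positive semidefinite. The global closed-loop system is $x_i^+=(A_i+B_iK_i)x_i+F_iv_i$, $i=1,\dots,M$, with $v_i$ given by the coupling formula. *)

(* Defs.v *)
From HB Require Import structures.
From mathcomp Require Import all_boot all_order all_algebra.
From mathcomp Require Import reals.
Set Implicit Arguments. Unset Strict Implicit. Unset Printing Implicit Defensive.
Import Order.TTheory GRing.Theory Num.Theory.
Local Open Scope ring_scope.

Section Defs.
Variable R : realType.

Definition psd k (P : 'M[R]_k) : Prop :=
  P^T = P /\ forall v : 'cV[R]_k, 0 <= (v^T *m P *m v) 0 0.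

Definition posdiag k (P : 'M[R]_k) : Prop :=
  (forall a b : 'I_k, a != b -> P a b = 0) /\ (forall a : 'I_k, 0 < P a a).

Definition rownorm1 p q (T : 'M[R]_(p, q)) (j : 'I_p) : R := \sum_(k < q) `|T j k|.

Variables (M m0 : nat) (n : 'I_M -> nat).

Definition Lcoef (Nm : 'I_M -> {set 'I_M}) (l : 'I_M -> 'I_M -> R) (i j : 'I_M) : R :=
  if i == j then \sum_(k in Nm i) l i k
  else if j \in Nm i then - l i j else 0.

Definition Ltilde Nm l : 'M[R]_(\sum_(i < M) m0) :=
  mxblock (fun i j : 'I_M => (Lcoef Nm l i j)%:M : 'M[R]_(m0, m0)).

Definition Cglob (C : forall i, 'M[R]_(m0, n i)) : 'M[R]_(\sum_(i < M) m0, \sum_(i < M) n i) :=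
  mxblock (fun i j : 'I_M => if i == j then C j else 0 : 'M[R]_(m0, n j)).

Definition Uglob Nm l C := Ltilde Nm l *m Cglob C.
Definition Wglob Nm l C := (Cglob C)^T *m (Ltilde Nm l)^T.

Definition Ublk Nm l C (i : 'I_M) : 'M[R]_(m0, \sum_(i < M) n i) :=
  @submxcol R M (fun _ => m0) _ (Uglob Nm l C) i.
Definition Wblk Nm l C (i : 'I_M) : 'M[R]_(n i, \sum_(i < M) m0) :=
  @submxcol R M n _ (Wglob Nm l C) i.

Definition LMI k (A E : 'M[R]_k) (B F : 'M[R]_(k, m0)) (C : 'M[R]_(m0, k))
    (S : 'M[R]_m0) (G : 'M[R]_(m0, k)) (H : 'M[R]_k) : 'M[R]_((k + m0) + (k + k)) :=
  let AEBG := A *m E + B *m G in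
  block_mx
    (block_mx E (2^-1 *: (E *m C^T)) (2^-1 *: (C *m E)) (2^-1 *: S + 2^-1 *: S^T))
    (block_mx AEBG^T E F^T 0)
    (block_mx AEBG F E 0)
    (block_mx E 0 0 H).

Definition gstate := forall i : 'I_M, 'cV[R]_(n i).

Definition gnorm (x : gstate) : R := \sum_(i < M) \sum_(a < n i) `|x i a 0|.

Definition cl_step (A : forall i, 'M[R]_(n i)) (B F : forall i, 'M[R]_(n i, m0))
    (C : forall i, 'M[R]_(m0, n i)) (K : forall i, 'M[R]_(m0, n i))
    (Nm : 'I_M -> {set 'I_M}) (l : 'I_M -> 'I_M -> R) (x : gstate) : gstate :=
  fun i => (A i + B i *m K i) *m x i
           + F i *m (\sum_(j in Nm i) l i j *: (C j *m x j - C i *m x i)).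

Definition asympt_stable (f : gstate -> gstate) : Prop :=
  (forall eps : R, 0 < eps -> exists2 delta : R, 0 < delta &
     forall x0 : gstate, gnorm x0 < delta -> forall k : nat, gnorm (iter k f x0) < eps)
  /\ (exists2 delta : R, 0 < delta &
     forall x0 : gstate, gnorm x0 < delta ->
       forall eps : R, 0 < eps -> exists N : nat, forall k : nat, (N <= k)%N ->
         gnorm (iter k f x0) < eps).

End Defs.

(* Main.v *)
Require Import Defs.
From HB Require Import structures.
From mathcomp Require Import all_boot all_order all_algebra.
From mathcomp Require Import reals.
From mathcomp Require Import ring lra.
Import Order.TTheory GRing.Theory Num.Theory.
Set Implicit Arguments. Unset Strict Implicit. Unset Printing Implicit Defensive.
Local Open Scope ring_scope.


Definition bl (R : realType) p q (u : 'cV[R]_p) (N : 'M[R]_(p, q)) (w : 'cV[R]_q) : R :=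
  (u^T *m N *m w) 0 0.

Lemma blT (R : realType) p q (u : 'cV[R]_p) (N : 'M[R]_(p, q)) (w : 'cV[R]_q) :
  bl u N w = bl w N^T u.
Proof.
have h : forall (Z : 'M[R]_1), Z 0 0 = Z^T 0 0 by move=> Z; rewrite mxE.
rewrite /bl h.
by rewrite !trmx_mul trmxK mulmxA.
Qed.

Lemma blZ (R : realType) p q (u : 'cV[R]_p) (r : R) (N : 'M[R]_(p, q)) (w : 'cV[R]_q) :
  bl u (r *: N) w = r * bl u N w.
Proof. by rewrite /bl -scalemxAr -scalemxAl mxE. Qed.

Lemma blD (R : realType) p q (u : 'cV[R]_p) (N1 N2 : 'M[R]_(p, q)) (w : 'cV[R]_q) :
  bl u (N1 + N2) w = bl u N1 w + bl u N2 w.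
Proof. by rewrite /bl mulmxDr mulmxDl mxE. Qed.

Lemma blNl (R : realType) p q (u : 'cV[R]_p) (N : 'M[R]_(p, q)) (w : 'cV[R]_q) :
  bl (- u) N w = - bl u N w.
Proof. by rewrite /bl linearN /= mulNmx mulNmx mxE. Qed.

Lemma blNr (R : realType) p q (u : 'cV[R]_p) (N : 'M[R]_(p, q)) (w : 'cV[R]_q) :
  bl u N (- w) = - bl u N w.
Proof. by rewrite /bl mulmxN mxE. Qed.

Lemma bl0 (R : realType) p q (u : 'cV[R]_p) (w : 'cV[R]_q) :
  bl u 0 w = 0.
Proof. by rewrite /bl mulmx0 mul0mx mxE. Qed.

Lemma blMl (R : realType) p q r (u : 'cV[R]_p) (N1 : 'M[R]_(p, q)) (N2 : 'M[R]_(q, r)) (w : 'cV[R]_r) :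
  bl u (N1 *m N2) w = bl (N1^T *m u) N2 w.
Proof. by rewrite /bl trmx_mul trmxK !mulmxA. Qed.

Lemma blMr (R : realType) p q r (u : 'cV[R]_p) (N1 : 'M[R]_(p, q)) (N2 : 'M[R]_(q, r)) (w : 'cV[R]_r) :
  bl u (N1 *m N2) w = bl u N1 (N2 *m w).
Proof. by rewrite /bl !mulmxA. Qed.

Lemma blDr (R : realType) p q (u : 'cV[R]_p) (N : 'M[R]_(p, q)) (w1 w2 : 'cV[R]_q) :
  bl u N (w1 + w2) = bl u N w1 + bl u N w2.
Proof. by rewrite /bl mulmxDr mxE. Qed.

Lemma bl_block (R : realType) p1 p2 q1 q2 (u1 : 'cV[R]_p1) (u2 : 'cV[R]_p2)
  (N11 : 'M[R]_(p1, q1)) N12 N21 N22 (w1 : 'cV[R]_q1) (w2 : 'cV[R]_q2) :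
  bl (col_mx u1 u2) (block_mx N11 N12 N21 N22) (col_mx w1 w2) =
  bl u1 N11 w1 + bl u1 N12 w2 + bl u2 N21 w1 + bl u2 N22 w2.
Proof.
rewrite /bl tr_col_mx mul_row_block mul_row_col !mulmxDl !mxE; lra.
Qed.

Lemma local_ineq (R : realType) k m0 (A E P : 'M[R]_k) (B F : 'M[R]_(k, m0))
  (C : 'M[R]_(m0, k)) (S : 'M[R]_m0) (G : 'M[R]_(m0, k)) (H : 'M[R]_k)
  (x : 'cV[R]_k) (v : 'cV[R]_m0) :
  E^T = E -> E *m P = 1%:M -> P *m E = 1%:M -> P^T = P ->
  posdiag H -> psd (LMI A E B F C S G H) ->
  bl ((A + B *m (G *m P)) *m x + F *m v) P
     ((A + B *m (G *m P)) *m x + F *m v)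
  <= bl x P x + bl v C x + bl v S v - \sum_a x a 0 ^+ 2 / H a a.
Proof.
move=> ET EP PE PT [Hd Hp] hL.
set xp := (A + B *m (G *m P)) *m x + F *m v.
have EPy : forall p (Y : 'M[R]_(k, p)), E *m (P *m Y) = Y.
  by move=> p Y; rewrite mulmxA EP mul1mx.
have PEy : forall p (Y : 'M[R]_(k, p)), P *m (E *m Y) = Y.
  by move=> p Y; rewrite mulmxA PE mul1mx.
pose Hinv := diag_mx (\row_a (H a a)^-1).
have HinvT : Hinv^T = Hinv by rewrite tr_diag_mx.
have HHy : forall p (Y : 'M[R]_(k, p)), H *m (Hinv *m Y) = Y.
  move=> p Y; rewrite mulmxA mul_mx_diag.
  have -> : (\matrix_(i, j) (H i j * (\row_a (H a a)^-1) 0 j)) = 1%:M :> 'M[R]_k.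
    apply/matrixP => i j; rewrite !mxE.
    case: (eqVneq i j) => [->|nij]; first by rewrite mulfV // gt_eqF.
    by rewrite (Hd i j nij) mul0r.
  by rewrite mul1mx.
have HHy' : forall p (Y : 'M[R]_(k, p)), Hinv *m (H *m Y) = Y.
  move=> p Y; rewrite mulmxA mul_diag_mx.
  have -> : (\matrix_(i, j) ((\row_a (H a a)^-1) 0 i * H i j)) = 1%:M :> 'M[R]_k.
    apply/matrixP => i j; rewrite !mxE.
    case: (eqVneq i j) => [->|nij]; first by rewrite mulVf // gt_eqF.
    by rewrite (Hd i j nij) mulr0.
  by rewrite mul1mx.
have xHx : bl x Hinv x = \sum_a x a 0 ^+ 2 / H a a.
  rewrite /bl mul_mx_diag !mxE; apply: eq_bigr => a _; rewrite !mxE expr2; ring.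
pose a := P *m x. pose c := - (P *m xp). pose d := - (Hinv *m x).
have L : 0 <= bl (col_mx (col_mx a v) (col_mx c d)) (LMI A E B F C S G H)
                 (col_mx (col_mx a v) (col_mx c d)) := hL.2 _.
rewrite /LMI !bl_block !blD !blZ !bl0 in L.
have t1 : bl a E a = bl x P x.
  by rewrite /a /bl !trmx_mul PT -!mulmxA EPy.
have t2 : bl a (E *m C^T) v = bl v C x.
  by rewrite [RHS]blT /a /bl !trmx_mul PT -!mulmxA PEy.
have t3 : bl v (C *m E) a = bl v C x.
  by rewrite /a /bl -!mulmxA EPy.
have t4 : bl v S^T v = bl v S v by rewrite blT trmxK.
have t5 : bl a (A *m E + B *m G)^T c = bl c (A *m E) a + bl c (B *m G) a.
  by rewrite blT trmxK blD.
have t9 : bl c (A *m E) a + bl c (B *m G) a = - bl xp P ((A + B *m (G *m P)) *m x).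
  rewrite /a /c !blNl /bl !trmx_mul PT -!mulmxA EPy.
  rewrite mulmxDl !mulmxDr !mxE -!mulmxA; lra.
have t7 : bl v F^T c = bl c F v by rewrite [RHS]blT.
have t10 : bl c F v = - bl xp P (F *m v).
  by rewrite /c blNl /bl !trmx_mul PT -!mulmxA.
have sumx : bl xp P ((A + B *m (G *m P)) *m x) + bl xp P (F *m v) = bl xp P xp.
  by rewrite -blDr.
have t13 : bl c E c = bl xp P xp.
  by rewrite /c blNl blNr opprK /bl !trmx_mul PT -!mulmxA EPy.
have t6 : bl a E d = bl d E a by rewrite blT ET.
have t11 : bl d E a = - bl x Hinv x.
  by rewrite /d /a blNl /bl !trmx_mul HinvT -!mulmxA EPy.
have t16 : bl d H d = bl x Hinv x.
  by rewrite /d blNl blNr opprK /bl !trmx_mul HinvT -!mulmxA HHy'.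
rewrite -xHx.
rewrite t1 t2 t3 t4 t5 t6 t7 t9 t10 t11 t13 t16 in L.
rewrite -sumx; lra.
Qed.

Lemma bl_id (R : realType) k (y : 'cV[R]_k) : bl y 1%:M y = \sum_j y j 0 ^+ 2.
Proof. by rewrite /bl mulmx1 !mxE; apply: eq_bigr => j _; rewrite !mxE expr2. Qed.

Lemma bl_E_ge (R : realType) k (E : 'M[R]_k) (e : R) (y : 'cV[R]_k) :
  psd (E - e *: 1%:M) -> e * bl y 1%:M y <= bl y E y.
Proof.
move=> [_ h]; have := h y; rewrite -/(bl y _ y).
have -> : E - e *: 1%:M = E + (- e) *: 1%:M by rewrite scaleNr.
rewrite blD blZ; lra.
Qed.

Lemma psd_unit (R : realType) k (E : 'M[R]_k) (e : R) :
  0 < e -> psd (E - e *: 1%:M) -> E \in unitmx.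
Proof.
move=> he hp; rewrite -row_free_unit -kermx_eq0; apply/eqP.
apply/row_matrixP => i; rewrite row0.
set r := row i (kermx E).
have rE : r *m E = 0 by rewrite /r -row_mul mulmx_ker row0.
have := bl_E_ge (r^T) hp.
have -> : bl r^T E r^T = 0 by rewrite /bl trmxK rE mul0mx mxE.
rewrite bl_id => hs.
have s0 : 0 <= \sum_j r^T j 0 ^+ 2 by apply: sumr_ge0 => j _; apply: sqr_ge0.
have s1 : \sum_j r^T j 0 ^+ 2 = 0.
  apply/eqP; rewrite eq_le s0 andbT.
  by rewrite -(pmulr_rle0 _ he).
apply/rowP => j.
have := psumr_eq0P (P := xpredT) (F := fun j => r^T j 0 ^+ 2) (fun j _ => sqr_ge0 _) s1 (i := j) isT.
move=> /eqP; rewrite sqrf_eq0 => /eqP; rewrite !mxE => ->. by [].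
Qed.


Lemma single_le_sum (R : realType) (T : finType) (f : T -> R) (t : T) :
  (forall s, 0 <= f s) -> f t <= \sum_s f s.
Proof.
move=> h; rewrite (bigD1 t) //= lerDl; apply: sumr_ge0 => s _; exact: h.
Qed.

Lemma wCS (R : realType) (T : finType) (a X : T -> R) :
  (\sum_c a c * X c) ^+ 2 <= (\sum_c `|a c|) * (\sum_c `|a c| * X c ^+ 2).
Proof.
have h1 : `|\sum_c a c * X c| <= \sum_c `|a c| * `|X c|.
  by apply: le_trans (ler_norm_sum _ _ _) _; apply: ler_sum => c _; rewrite normrM.
have h2 : (\sum_c a c * X c) ^+ 2 <= (\sum_c `|a c| * `|X c|) ^+ 2.
  rewrite -real_normK ?num_real //; apply: lerXn2r => //; rewrite ?nnegrE //.
  by apply: sumr_ge0 => c _; rewrite mulr_ge0.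
apply: le_trans h2 _.
set u := fun c => `|a c| * `|X c|.
have e1 : (\sum_c u c) ^+ 2 = \sum_c \sum_d u c * u d.
  by rewrite expr2 big_distrl /=; apply: eq_bigr => c _; rewrite big_distrr.
have e2 : (\sum_c `|a c|) * (\sum_c `|a c| * X c ^+ 2) =
          \sum_c \sum_d `|a c| * (`|a d| * X d ^+ 2).
  by rewrite big_distrl /=; apply: eq_bigr => c _; rewrite big_distrr.
have e3 : \sum_c \sum_d `|a c| * (`|a d| * X d ^+ 2) =
          \sum_c \sum_d `|a d| * (`|a c| * X c ^+ 2).
  by rewrite exchange_big.
rewrite e1 e2.
have : 2 * \sum_c \sum_d u c * u d <=
       \sum_c \sum_d `|a c| * (`|a d| * X d ^+ 2) + \sum_c \sum_d `|a d| * (`|a c| * X c ^+ 2).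
  rewrite mulr_sumr -big_split /=; apply: ler_sum => c _.
  rewrite mulr_sumr -big_split /=; apply: ler_sum => d _.
  rewrite /u.
  have ac := normr_ge0 (a c); have ad := normr_ge0 (a d).
  have : 0 <= `|a c| * `|a d| * (`|X c| - `|X d|) ^+ 2.
    by apply: mulr_ge0; [apply: mulr_ge0|apply: sqr_ge0].
  rewrite -!(real_normK (num_real (X _))).
  move=> h; nra.
rewrite -e3; lra.
Qed.

Lemma sq_le_card (R : realType) (T : finType) (z : T -> R) :
  (\sum_c `|z c|) ^+ 2 <= (\sum_(c : T) (1 : R)) * \sum_c z c ^+ 2.
Proof.
have := wCS (fun _ => 1) (fun c => `|z c|).
rewrite normr1.
under eq_bigr do rewrite mul1r.
under [X in _ <= _ * X]eq_bigr do rewrite mul1r real_normK ?num_real //.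
by [].
Qed.

Lemma sumsq_le (R : realType) (T : finType) (z : T -> R) :
  \sum_c z c ^+ 2 <= (\sum_c `|z c|) ^+ 2.
Proof.
rewrite [X in _ <= X]expr2 big_distrl /=; apply: ler_sum => c _.
rewrite -real_normK ?num_real // expr2; apply: ler_wpM2l => //.
by rewrite (bigD1 c) //= lerDl; apply: sumr_ge0 => s _.
Qed.


Lemma submxcolE (R : realType) p (p_ : 'I_p -> nat) n (A : 'M[R]_(\sum_i p_ i, n)) i k j :
  submxcol A i k j = A (tagnat.Rank i k) j.
Proof. by rewrite /submxcol mxE. Qed.

Lemma mxcolE (R : realType) p (p_ : 'I_p -> nat) n (B : forall i, 'M[R]_(p_ i, n)) i k j :
  (mxcol B) (tagnat.Rank i k) j = B i k j.
Proof. by rewrite -submxcolE mxcolK. Qed.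

Lemma sum_split (R : realType) p (p_ : 'I_p -> nat) (f : 'I_(\sum_i p_ i) -> R) :
  \sum_r f r = \sum_i \sum_(k < p_ i) f (tagnat.Rank i k).
Proof.
have := @mul_mxrow_mxcol R p p_ 1 1 (fun i => const_mx 1) (fun i => submxcol (\col_r f r) i).
rewrite mxrow_const submxcolK => /matrixP /(_ 0 0).
rewrite !mxE summxE => h.
have -> : \sum_r f r = \sum_j (const_mx 1 : 'rV[R]_(\sum_i p_ i)) 0 j * (\col_r f r) j 0 :> R.
  by apply: eq_bigr => r _; rewrite !mxE mul1r.
rewrite h; apply: eq_bigr => i _.
by rewrite !mxE; apply: eq_bigr => k _; rewrite !mxE mul1r.
Qed.

Lemma sum_split' (R : realType) p (p_ : 'I_p -> nat) (f : 'I_(\sum_i p_ i) -> R) :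
  \sum_r f r = \sum_i \sum_(k < p_ i) f (tagnat.Rank i k).
Proof. exact: sum_split. Qed.


Lemma Cglob_mul (R : realType) M m0 (n : 'I_M -> nat) (C : forall i, 'M[R]_(m0, n i))
  (X : forall i, 'cV[R]_(n i)) :
  Cglob C *m mxcol X = mxcol (fun i => C i *m X i).
Proof.
rewrite /Cglob mul_mxblock_mxrow; apply: eq_mxcol => i.
rewrite (bigD1 i) //= eqxx big1 ?addr0 // => j /negPf; rewrite eq_sym => ->.
by rewrite mul0mx.
Qed.

Lemma Lt_mul (R : realType) M m0 (Nm : 'I_M -> {set 'I_M}) (l : 'I_M -> 'I_M -> R) (y : forall i : 'I_M, 'cV[R]_m0) :
  Ltilde m0 Nm l *m mxcol y = mxcol (fun i => \sum_j Lcoef Nm l i j *: y j).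
Proof.
rewrite /Ltilde mul_mxblock_mxrow; apply: eq_mxcol => i.
by apply: eq_bigr => j _; rewrite mul_scalar_mx.
Qed.

Lemma Lcoef_sum (R : realType) M m0 (Nm : 'I_M -> {set 'I_M}) (l : 'I_M -> 'I_M -> R) (y : forall i : 'I_M, 'cV[R]_m0) i :
  i \notin Nm i ->
  \sum_j Lcoef Nm l i j *: y j = - \sum_(j in Nm i) l i j *: (y j - y i).
Proof.
move=> hi.
rewrite (bigD1 i) //= /Lcoef eqxx.
have -> : \sum_(j | j != i) (if i == j then \sum_(k in Nm i) l i k
                            else if j \in Nm i then - l i j else 0) *: y j
          = \sum_(j in Nm i) (- l i j) *: y j.
  rewrite [RHS](bigID (fun j => j != i)) /=.
  rewrite [X in _ = _ + X]big1; last first.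
    by move=> j /andP [jN]; rewrite negbK => /eqP ji; move: jN; rewrite ji (negPf hi).
  rewrite addr0 [RHS](eq_bigl (fun j => (j != i) && (j \in Nm i))); last by move=> j; rewrite andbC.
  rewrite [RHS]big_mkcondr /=; apply: eq_bigr => j ji.
  by rewrite eq_sym (negPf ji); case: (j \in Nm i); rewrite ?scale0r.
rewrite -sumrN scaler_suml -big_split /=; apply: eq_bigr => j _.
by rewrite scalerBr opprB scaleNr addrC.
Qed.

Lemma Ublk_mul (R : realType) M m0 (n : 'I_M -> nat) (Nm : 'I_M -> {set 'I_M}) (l : 'I_M -> 'I_M -> R)
  (C : forall i, 'M[R]_(m0, n i)) (X : forall i, 'cV[R]_(n i)) i :
  i \notin Nm i ->
  Ublk Nm l C i *m mxcol X = - \sum_(j in Nm i) l i j *: (C j *m X j - C i *m X i).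
Proof.
move=> hi.
rewrite /Ublk submxcol_mul /Uglob -mulmxA Cglob_mul Lt_mul mxcolK.
exact: Lcoef_sum.
Qed.

Lemma Ublk_E (R : realType) M m0 (n : 'I_M -> nat) (Nm : 'I_M -> {set 'I_M}) (l : 'I_M -> 'I_M -> R)
  (C : forall i, 'M[R]_(m0, n i)) i k c :
  Ublk Nm l C i k c = Uglob Nm l C (tagnat.Rank i k) c.
Proof. by rewrite /Ublk /submxcol mxE. Qed.

Lemma Wblk_E (R : realType) M m0 (n : 'I_M -> nat) (Nm : 'I_M -> {set 'I_M}) (l : 'I_M -> 'I_M -> R)
  (C : forall i, 'M[R]_(m0, n i)) j a r :
  Wblk Nm l C j a r = Uglob Nm l C r (tagnat.Rank j a).
Proof. by rewrite /Wblk /submxcol mxE /Wglob /Uglob -trmx_mul mxE. Qed.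


Lemma abstract_stab (R : realType) (T : Type) (f : T -> T) (V Q g : T -> R)
  (e0 c K : R) :
  0 < e0 -> e0 <= c -> 0 <= K ->
  (forall x, 0 <= V x) -> (forall x, 0 <= g x) -> (forall x, 0 <= Q x) ->
  (forall x, V (f x) <= V x - e0 * Q x) ->
  (forall x, V x <= c * Q x) ->
  (forall x, Q x <= g x ^+ 2) ->
  (forall x, g x ^+ 2 <= K * Q x) ->
  (forall eps : R, 0 < eps -> exists2 delta : R, 0 < delta &
     forall x0, g x0 < delta -> forall k : nat, g (iter k f x0) < eps)
  /\ (exists2 delta : R, 0 < delta &
     forall x0, g x0 < delta ->
       forall eps : R, 0 < eps -> exists N : nat, forall k : nat, (N <= k)%N ->
         g (iter k f x0) < eps).
Proof.
move=> he0 hc hK hV hg hQ0 hdec hVQ hQg hgQ.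
have c0 : 0 < c by apply: lt_le_trans hc.
have hQV : forall x, e0 * Q x <= V x.
  by move=> x; have := hV (f x); have := hdec x; lra.
have hmono : forall x k, V (iter k f x) <= V x.
  move=> x; elim=> [|k IH] //=; apply: le_trans IH.
  have := hdec (iter k f x); have := hQV (iter k f x); have := hV (iter k f x).
  have := hQ0 (iter k f x); have : 0 < e0 by []; nra.
have hgV : forall x, e0 * g x ^+ 2 <= K * V x.
  move=> x; have h1 := hgQ x; have h2 := hQV x.
  have h3 : K * (e0 * Q x) <= K * V x by apply: ler_wpM2l.
  have h4 : e0 * g x ^+ 2 <= e0 * (K * Q x) by apply: ler_wpM2l => //; lra.
  lra.
split.
  move=> ep hep.
  pose t := ep ^+ 2 * e0 / (K * c + 1).
  have Kc0 : 0 <= K * c by apply: mulr_ge0 => //; apply: ltW.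
  have t0 : 0 < t by rewrite /t; apply: divr_gt0; [apply: mulr_gt0; [apply: exprn_gt0|]|]; lra.
  have tE : t * (K * c + 1) = ep ^+ 2 * e0 by rewrite /t mulfVK //; lra.
  exists (Num.min 1 t); first by rewrite lt_min; apply/andP; split => //; lra.
  move=> x0; rewrite lt_min => /andP [h1 h2] k.
  have g0 := hg x0.
  have hx0 : g x0 ^+ 2 <= g x0 by rewrite expr2; nra.
  have h3 := hgV (iter k f x0).
  have h4 := hmono x0 k.
  have h5 := hVQ x0. have h6 := hQg x0.
  have h7 : K * V x0 <= K * c * g x0 ^+ 2.
    rewrite -mulrA; apply: ler_wpM2l => //; apply: le_trans h5 _.
    by apply: ler_wpM2l => //; lra.
  have h8 : e0 * g (iter k f x0) ^+ 2 < e0 * ep ^+ 2.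
    apply: le_lt_trans h3 _; apply: le_lt_trans (ler_wpM2l hK h4) _.
    apply: le_lt_trans h7 _. nra.
  rewrite ltr_pM2l // in h8.
  have := hg (iter k f x0); have : 0 < ep by []; move: h8; rewrite !expr2; nra.
exists 1 => // x0 _ ep hep.
pose s := e0 / c.
have s0 : 0 < s by apply: divr_gt0.
have s1 : s <= 1 by rewrite /s ler_pdivrMr // mul1r.
have sc : s * c = e0 by rewrite /s mulfVK //; lra.
have hgeo : forall k : nat, (1 + k%:R * s) * V (iter k f x0) <= V x0.
  elim=> [|k IH]; first by rewrite mul0r addr0 mul1r.
  rewrite iterS.
  have a1 := hdec (iter k f x0).
  have a2 := hVQ (iter k f x0).
  have a3 := hV (iter k f x0).
  have a4 : s * V (iter k f x0) <= e0 * Q (iter k f x0).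
    rewrite -sc -mulrA; apply: ler_wpM2l; [lra|]. by [].
  have a5 : V (f (iter k f x0)) <= (1 - s) * V (iter k f x0) by lra.
  have kk : 0 <= k%:R :> R by apply: ler0n.
  rewrite -natr1; apply: le_trans IH.
  have a6 := hV (f (iter k f x0)).
  have a7 : (1 + (k%:R + 1) * s) * V (f (iter k f x0)) <=
            (1 + (k%:R + 1) * s) * ((1 - s) * V (iter k f x0)).
    apply: ler_wpM2l => //; nra.
  apply: le_trans a7 _.
  have a8 : 0 <= (k%:R + 1) * s ^+ 2 * V (iter k f x0).
    apply: mulr_ge0 => //; apply: mulr_ge0; [lra|apply: exprn_ge0; lra].
  rewrite expr2 in a8.
  have -> : (1 + (k%:R + 1) * s) * ((1 - s) * V (iter k f x0)) =
    (1 + k%:R * s) * V (iter k f x0) - (k%:R + 1) * (s * s) * V (iter k f x0) by ring.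
  lra.
pose z := K * V x0 / (e0 * ep ^+ 2 * s).
have pos : 0 < e0 * ep ^+ 2 * s by apply: mulr_gt0 => //; apply: mulr_gt0 => //; apply: exprn_gt0.
have z0 : 0 <= z.
  rewrite /z; apply: divr_ge0; first by apply: mulr_ge0.
  exact: ltW.
exists (Num.bound z) => k hk.
have hz := archi_boundP z0.
have hk' : (Num.bound z)%:R <= k%:R :> R by rewrite ler_nat.
have zE : z * (e0 * ep ^+ 2 * s) = K * V x0 by rewrite /z mulfVK //; lra.
have b1 := hgeo k.
have b2 := hgV (iter k f x0).
have b3 := hV (iter k f x0).
have b4 : K * V x0 < e0 * ep ^+ 2 * (1 + k%:R * s).
  rewrite -zE. have kk : 0 <= k%:R :> R by apply: ler0n. nra.
have b5 : e0 * g (iter k f x0) ^+ 2 * (1 + k%:R * s) < e0 * ep ^+ 2 * (1 + k%:R * s).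
  apply: le_lt_trans b4.
  have kk : 0 <= k%:R :> R by apply: ler0n.
  have c1 : K * ((1 + k%:R * s) * V (iter k f x0)) <= K * V x0 by apply: ler_wpM2l.
  have c2 : e0 * g (iter k f x0) ^+ 2 * (1 + k%:R * s) <= K * V (iter k f x0) * (1 + k%:R * s).
    apply: ler_wpM2r => //; nra.
  lra.
have kk : 0 <= k%:R :> R by apply: ler0n.
have b6 : g (iter k f x0) ^+ 2 < ep ^+ 2.
  rewrite -(ltr_pM2l he0) -(ltr_pM2r (_ : 0 < 1 + k%:R * s)) //; nra.
have := hg (iter k f x0); move: b6; rewrite !expr2; nra.
Qed.


Lemma flat (R : realType) M (n : 'I_M -> nat) (F : forall i, 'I_(n i) -> R) :
  \sum_i \sum_(a < n i) F i a = \sum_(p : {i : 'I_M & 'I_(n i)}) F (tag p) (tagged p).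
Proof. exact: (@sig_big_dep R 0 +%R 'I_M (fun i => 'I_(n i)) xpredT (fun _ _ => true) F). Qed.

Lemma blPE (R : realType) k (E P : 'M[R]_k) (x : 'cV[R]_k) :
  E *m P = 1%:M -> P^T = P -> bl x P x = bl (P *m x) E (P *m x).
Proof.
move=> EP PT; rewrite /bl trmx_mul PT -!mulmxA.
by rewrite [E *m (P *m x)]mulmxA EP mul1mx.
Qed.

Lemma bl_diag (R : realType) k (S : 'M[R]_k) (z : 'cV[R]_k) :
  (forall a b : 'I_k, a != b -> S a b = 0) ->
  bl z S z = \sum_a S a a * z a 0 ^+ 2.
Proof.
move=> hS; rewrite /bl !mxE; apply: eq_bigr => a _; rewrite !mxE.
rewrite (bigD1 a) //= big1 ?addr0; first by rewrite !mxE expr2; ring.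
by move=> b ba; rewrite hS ?mulr0.
Qed.

Lemma quad_bound (R : realType) k (P : 'M[R]_k) (x : 'cV[R]_k) :
  bl x P x <= (\sum_a \sum_b `|P a b|) * \sum_a x a 0 ^+ 2.
Proof.
have hq : forall a, x a 0 ^+ 2 <= \sum_a x a 0 ^+ 2.
  by move=> a; rewrite (bigD1 a) //= lerDl; apply: sumr_ge0 => s _; apply: sqr_ge0.
rewrite /bl !mxE big_distrl /=.
under eq_bigr do rewrite !mxE big_distrl /=.
rewrite exchange_big /=; apply: ler_sum => a _.
rewrite big_distrl /=; apply: ler_sum => b _.
rewrite !mxE.
have h1 := hq a; have h2 := hq b.
have e1 : `|x a 0| ^+ 2 = x a 0 ^+ 2 by rewrite real_normK ?num_real.
have e2 : `|x b 0| ^+ 2 = x b 0 ^+ 2 by rewrite real_normK ?num_real.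
have h3 : x a 0 * P a b * x b 0 <= `|P a b| * (`|x a 0| * `|x b 0|).
  apply: le_trans (ler_norm _) _; rewrite !normrM; lra.
apply: le_trans h3 _; apply: ler_wpM2l => //.
have := sqr_ge0 (`|x a 0| - `|x b 0|); rewrite -e1 -e2 in h1 h2; nra.
Qed.

Lemma coupling1 (R : realType) M m0 (n : 'I_M -> nat) (C : forall i, 'M[R]_(m0, n i))
  (Nm : 'I_M -> {set 'I_M}) (l : 'I_M -> 'I_M -> R) (X : forall i, 'cV[R]_(n i)) :
  (forall i, i \notin Nm i) ->
  (forall w : 'cV[R]_(\sum_(i < M) m0), 0 <= (w^T *m Ltilde m0 Nm l *m w) 0 0) ->
  \sum_i bl (\sum_(j in Nm i) l i j *: (C j *m X j - C i *m X i)) (C i) (X i) <= 0.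
Proof.
move=> hNm hLt.
set v := fun i => \sum_(j in Nm i) l i j *: (C j *m X j - C i *m X i).
have := hLt (Cglob C *m mxcol X).
rewrite Cglob_mul -mulmxA Lt_mul.
have -> : mxcol (fun i => \sum_j Lcoef Nm l i j *: (C j *m X j)) = mxcol (fun i => - v i).
  by apply: eq_mxcol => i; rewrite (Lcoef_sum l (fun j => C j *m X j) (hNm i)).
rewrite tr_mxcol mul_mxrow_mxcol summxE.
have -> : \sum_i ((C i *m X i)^T *m - v i) 0 0 = - \sum_i bl (v i) (C i) (X i).
  rewrite -sumrN; apply: eq_bigr => i _.
  by rewrite blT /bl trmx_mul mulmxN mxE.
lra.
Qed.

Lemma Hpart (R : realType) k (H : 'M[R]_k) (x : 'cV[R]_k) (w : 'I_k -> R) (e0 : R) :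
  0 < e0 -> posdiag H -> (forall a, 0 <= w a) -> (forall a, H a a <= 1 / (w a + e0)) ->
  \sum_a x a 0 ^+ 2 * w a + e0 * \sum_a x a 0 ^+ 2 <= \sum_a x a 0 ^+ 2 / H a a.
Proof.
move=> he [_ Hp] hw hH.
rewrite mulr_sumr -big_split /=; apply: ler_sum => a _.
have p := Hp a; have q := hw a; have r := hH a.
have pos : 0 < w a + e0 by lra.
have h1 : H a a * (w a + e0) <= 1.
  by rewrite -(ler_pdivlMr _ _ pos) // mul1r -[X in _ <= X]mul1r.
have hi : H a a * (H a a)^-1 = 1 by rewrite mulfV // gt_eqF.
have hi0 : 0 < (H a a)^-1 by rewrite invr_gt0.
have h2 : w a + e0 <= (H a a)^-1.
  have := ler_wpM2l (ltW hi0) h1; rewrite mulr1 mulrA mulVf ?gt_eqF // mul1r.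
  by [].
have := sqr_ge0 (x a 0) => xx.
have : x a 0 ^+ 2 * (w a + e0) <= x a 0 ^+ 2 * (H a a)^-1 by apply: ler_wpM2l.
lra.
Qed.

Lemma coupling2 (R : realType) M m0 (n : 'I_M -> nat) (C : forall i, 'M[R]_(m0, n i))
  (Nm : 'I_M -> {set 'I_M}) (l : 'I_M -> 'I_M -> R) (S : 'I_M -> 'M[R]_m0)
  (X : forall i, 'cV[R]_(n i)) :
  (forall i, i \notin Nm i) -> (forall i, posdiag (S i)) ->
  (forall i (k : 'I_m0), 0 < rownorm1 (Ublk Nm l C i) k ->
     S i k k <= 1 / rownorm1 (Ublk Nm l C i) k) ->
  \sum_i bl (\sum_(j in Nm i) l i j *: (C j *m X j - C i *m X i)) (S i)
            (\sum_(j in Nm i) l i j *: (C j *m X j - C i *m X i))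
  <= \sum_i \sum_a X i a 0 ^+ 2 * rownorm1 (Wblk Nm l C i) a.
Proof.
move=> hNm hSd hS.
set Xg := mxcol X.
set U := Uglob Nm l C.
apply: (@le_trans _ _ (\sum_i \sum_(k < m0) \sum_c `|Ublk Nm l C i k c| * Xg c 0 ^+ 2)).
  apply: ler_sum => i _.
  have hv : \sum_(j in Nm i) l i j *: (C j *m X j - C i *m X i) = - (Ublk Nm l C i *m Xg).
    by rewrite /Xg (Ublk_mul l C X (hNm i)) opprK.
  rewrite hv blNl blNr opprK.
  have [Sd Sp] := hSd i.
  rewrite bl_diag //; apply: ler_sum => k _.
  have -> : (Ublk Nm l C i *m Xg) k 0 = \sum_c Ublk Nm l C i k c * Xg c 0 by rewrite mxE.
  have w := wCS (fun c => Ublk Nm l C i k c) (fun c => Xg c 0).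
  rewrite /= in w.
  set rn := \sum_c `|Ublk Nm l C i k c|  in w.
  set T := \sum_c `|Ublk Nm l C i k c| * Xg c 0 ^+ 2 in w *.
  set z := \sum_c Ublk Nm l C i k c * Xg c 0 in w *.
  have rn0 : 0 <= rn by apply: sumr_ge0 => c _.
  have T0 : 0 <= T by apply: sumr_ge0 => c _; apply: mulr_ge0 => //; apply: sqr_ge0.
  have z0 := sqr_ge0 z.
  have Sk := Sp k.
  have [rpos|] := ltrP 0 rn.
    have h := hS i k rpos; rewrite -/rn in h.
    have h1 : S i k k * rn <= 1.
      by rewrite -(ler_pdivlMr _ _ rpos) // mul1r -[X in _ <= X]mul1r.
    have h2 : S i k k * z ^+ 2 <= S i k k * (rn * T) by apply: ler_wpM2l => //; lra.
    have h3 : S i k k * rn * T <= T by rewrite -[X in _ <= X]mul1r; apply: ler_wpM2r.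
    by rewrite mulrA in h2; lra.
  move=> rle; have r0 : rn = 0 by apply/eqP; rewrite eq_le rle rn0.
  rewrite r0 mul0r in w.
  have -> : z ^+ 2 = 0 by apply/eqP; rewrite eq_le w z0.
  by rewrite mulr0.
have e1 : \sum_i \sum_(k < m0) \sum_c `|Ublk Nm l C i k c| * Xg c 0 ^+ 2 =
          \sum_r \sum_c `|U r c| * Xg c 0 ^+ 2.
  rewrite (sum_split (p_ := fun _ : 'I_M => m0) (fun r => \sum_c `|U r c| * Xg c 0 ^+ 2)).
  by apply: eq_bigr => i _; apply: eq_bigr => k _; apply: eq_bigr => c _; rewrite Ublk_E.
rewrite e1 exchange_big /=.
rewrite (sum_split (p_ := n) (fun c => \sum_r `|U r c| * Xg c 0 ^+ 2)).
rewrite le_eqVlt; apply/orP; left; apply/eqP.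
apply: eq_bigr => j _; apply: eq_bigr => a _.
rewrite /rownorm1 mulr_sumr; apply: eq_bigr => r _.
by rewrite Wblk_E /Xg mxcolE mulrC.
Qed.

Theorem theorem1 (R : realType) (M m0 : nat) (n : 'I_M -> nat)
  (A : forall i, 'M[R]_(n i)) (B F : forall i, 'M[R]_(n i, m0))
  (C : forall i, 'M[R]_(m0, n i))
  (Nm : 'I_M -> {set 'I_M}) (l : 'I_M -> 'I_M -> R)
  (eps0 : R) (eps : 'I_M -> R)
  (S : 'I_M -> 'M[R]_m0) (G : forall i, 'M[R]_(m0, n i))
  (E H : forall i, 'M[R]_(n i)) :
  (0 < M)%N -> (0 < m0)%N ->
  (forall i, i \notin Nm i) ->
  (forall w : 'cV[R]_(\sum_(i < M) m0), 0 <= (w^T *m Ltilde m0 Nm l *m w) 0 0) ->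
  0 < eps0 -> (forall i, 0 < eps i) ->
  (forall i, (E i)^T = E i) ->
  (forall i, psd (E i - eps i *: 1%:M)) ->
  (forall i, posdiag (H i) /\ posdiag (S i)) ->
  (forall i, psd (LMI (A i) (E i) (B i) (F i) (C i) (S i) (G i) (H i))) ->
  (forall i (j : 'I_(n i)),
     H i j j <= 1 / (rownorm1 (Wblk Nm l C i) j + eps0)) ->
  (forall i (k : 'I_m0), 0 < rownorm1 (Ublk Nm l C i) k ->
     S i k k <= 1 / rownorm1 (Ublk Nm l C i) k) ->
  asympt_stable
    (cl_step A B F C (fun i => G i *m invmx (E i)) Nm l).
Proof.
move=> _ _ hNm hLt he0 heps hET hEpsd hHS hLMI hH hS.
have unitE : forall i, E i \in unitmx := fun i => psd_unit (heps i) (hEpsd i).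
have EP : forall i, E i *m invmx (E i) = 1%:M := fun i => mulmxV (unitE i).
have PE : forall i, invmx (E i) *m E i = 1%:M := fun i => mulVmx (unitE i).
have PT : forall i, (invmx (E i))^T = invmx (E i) by move=> i; rewrite trmx_inv hET.
pose V := fun X : (forall i, 'cV[R]_(n i)) => \sum_i bl (X i) (invmx (E i)) (X i).
pose Q := fun X : (forall i, 'cV[R]_(n i)) => \sum_i \sum_(a < n i) X i a 0 ^+ 2.
pose cP : 'I_M -> R := fun i => \sum_a \sum_b `|invmx (E i) a b|.
have cP0 : 0 <= \sum_i cP i.
  by apply: sumr_ge0 => i _; apply: sumr_ge0 => a _; apply: sumr_ge0 => b _.
have Q0 : forall X, 0 <= Q X.
  by move=> X; apply: sumr_ge0 => i _; apply: sumr_ge0 => a _; apply: sqr_ge0.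
rewrite /asympt_stable.
have AS := (abstract_stab (T := forall i, 'cV[R]_(n i)) (f := cl_step A B F C (fun i => G i *m invmx (E i)) Nm l) (V := V) (Q := Q) (g := @Defs.gnorm R M n) (e0 := eps0)
          (c := eps0 + \sum_i cP i) (K := \sum_(p : {i : 'I_M & 'I_(n i)}) (1 : R))).
apply AS.
- exact: he0.
- lra.
- by apply: sumr_ge0.
- move=> X; apply: sumr_ge0 => i _.
  rewrite (blPE (X i) (EP i) (PT i)).
  apply: le_trans (bl_E_ge _ (hEpsd i)).
  apply: mulr_ge0; first exact: ltW.
  by rewrite bl_id; apply: sumr_ge0 => a _; apply: sqr_ge0.
- by move=> X; apply: sumr_ge0 => i _; apply: sumr_ge0 => a _.
- exact: Q0.
- move=> X.
  set v := fun i => \sum_(j in Nm i) l i j *: (C j *m X j - C i *m X i).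
  have c1 : \sum_i bl (v i) (C i) (X i) <= 0 := @coupling1 R M m0 n C Nm l X hNm hLt.
  have c2 : \sum_i bl (v i) (S i) (v i) <= \sum_i \sum_a X i a 0 ^+ 2 * rownorm1 (Wblk Nm l C i) a
    := @coupling2 R M m0 n C Nm l S X hNm (fun i => (hHS i).2) hS.
  have step : forall i,
    bl (cl_step A B F C (fun i => G i *m invmx (E i)) Nm l X i) (invmx (E i))
       (cl_step A B F C (fun i => G i *m invmx (E i)) Nm l X i)
    <= bl (X i) (invmx (E i)) (X i) + bl (v i) (C i) (X i)
       + (bl (v i) (S i) (v i) - \sum_a X i a 0 ^+ 2 * rownorm1 (Wblk Nm l C i) a)
       - eps0 * \sum_a X i a 0 ^+ 2.
    move=> i.
    have L := local_ineq (X i) (v i) (hET i) (EP i) (PE i) (PT i) (hHS i).1 (hLMI i).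
    have Hp := Hpart (X i) he0 (hHS i).1
                 (fun a => sumr_ge0 _ (fun r _ => normr_ge0 (Wblk Nm l C i a r))) (hH i).
    rewrite /cl_step -/(v i).
    lra.
  have S1 : V (cl_step A B F C (fun i => G i *m invmx (E i)) Nm l X) <=
    \sum_i (bl (X i) (invmx (E i)) (X i) + bl (v i) (C i) (X i)
       + (bl (v i) (S i) (v i) - \sum_a X i a 0 ^+ 2 * rownorm1 (Wblk Nm l C i) a)
       - eps0 * \sum_a X i a 0 ^+ 2).
    by apply: ler_sum => i _; exact: step.
  rewrite sumrB in S1.
  rewrite !big_split /= in S1.
  rewrite sumrN -mulr_sumr in S1.
  have eV : \sum_i bl (X i) (invmx (E i)) (X i) = V X by [].
  have eQ : \sum_i \sum_(a < n i) X i a 0 ^+ 2 = Q X by [].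
  rewrite eV eQ in S1.
  lra.
- move=> X.
  have h1 : V X <= \sum_i cP i * \sum_(a < n i) X i a 0 ^+ 2.
    by apply: ler_sum => i _; exact: quad_bound.
  apply: le_trans h1 _.
  rewrite /Q mulr_sumr; apply: ler_sum => i _.
  apply: ler_wpM2r; first by apply: sumr_ge0 => a _; apply: sqr_ge0.
  have : cP i <= \sum_i cP i.
    by rewrite (bigD1 i) //= lerDl; apply: sumr_ge0 => j _; apply: sumr_ge0 => a _; apply: sumr_ge0.
  lra.
- move=> X; rewrite /Q /Defs.gnorm.
  rewrite (flat (fun i a => X i a 0 ^+ 2)) (flat (fun i a => `|X i a 0|)).
  exact: (sumsq_le (fun p => X (tag p) (tagged p) 0)).
- move=> X; rewrite /Q /Defs.gnorm.
  rewrite (flat (fun i a => X i a 0 ^+ 2)) (flat (fun i a => `|X i a 0|)).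
  exact: (sq_le_card (fun p => X (tag p) (tagged p) 0)).
Qed.
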